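(* Let $b\ge 2$ be even and $n\ge 2$, and put $c_i=b^{n+i}+1$. Then $$\mathrm{Ap}(SC^{+}(b,n),c_0)=\Big\{\sum_{i=1}^{n} t_i c_i : (t_1,\dots,t_n)\in RC_b(n)\Big\}.$$
   Context: For an even integer $b\ge2$ and $n\ge0$, $SC^{+}(b,n)=\langle\{b^{n+i}+1: i\in\mathbb{N}\}\rangle$ (submonoid of $(\mathbb{N},+)$ generated by these numbers). $\mathrm{Ap}(S,x)=\{s\in S:s-x\notin S\}$. $RC_b(n)$ is the set of $(t_1,\dots,t_n)\in\{0,1,\dots,b\}^n$ such that: (i) if $t_i=b$ then $t_j=0$ for all $1\le j<i$; (ii) $t_n\le b-1$; (iii) if $t_n=b-1$ then $t_1\le 1$ and $t_i=0$ for all $i\notin\{1,n\}$. *)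

(* Defs.v *)
From mathcomp Require Import all_boot.
Set Implicit Arguments. Unset Strict Implicit. Unset Printing Implicit Defensive.

Definition gen (b n i : nat) : nat := b ^ (n + i) + 1.

Definition inSC (b n s : nat) : Prop :=
  exists (k : nat) (a : nat -> nat), s = \sum_(i < k) a i * gen b n i.

(* Apery set Ap(S, x) = { s in S : s - x notin S } (s - x taken in Z;
   a negative integer is never in S) *)
Definition inApery (b n x s : nat) : Prop :=
  inSC b n s /\ ~ (x <= s /\ inSC b n (s - x)).

(* RC_b(n): tuples (t_1..t_n) in {0..b}^n, encoded as t : 'I_n -> nat
   with t_{j+1} = t j (0-based indexing). *)
Definition inRC (b n : nat) (t : 'I_n -> nat) : Prop :=
  (forall j, t j <= b) /\
  (forall j : 'I_n, t j = b -> forall i : 'I_n, i < j -> t i = 0) /\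
  (forall j : 'I_n, j.+1 = n -> t j <= b.-1) /\
  (forall j : 'I_n, j.+1 = n -> t j = b.-1 ->
     (forall i : 'I_n, i = 0 :> nat -> t i <= 1) /\
     (forall i : 'I_n, i <> 0 :> nat -> i.+1 <> n -> t i = 0)).

Definition RCval (b n : nat) (t : 'I_n -> nat) : nat :=
  \sum_(j < n) t j * gen b n j.+1.
Arguments inRC : clear implicits.
Arguments RCval : clear implicits.

(* Main.v *)
Require Import Defs.
From mathcomp Require Import all_boot zify.
From mathcomp Require Import ring.

Section Aux.
Variables (b n : nat).
Hypothesis hb : 2 <= b.
Hypothesis hn : 2 <= n.

Definition R i := \sum_(j < i) b ^ j.

Lemma R0 : R 0 = 0. Proof. by rewrite /R big_ord0. Qed.
Lemma RS i : R i.+1 = b * R i + 1.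
Proof.
rewrite /R big_ord_recl expn0 big_distrr /= addnC; congr (_ + 1).
by apply: eq_bigr => j _; rewrite expnS.
Qed.
Lemma RS' i : R i.+1 = R i + b ^ i.
Proof. by rewrite /R big_ord_recr. Qed.
Lemma R_pow i : (b - 1) * R i + 1 = b ^ i.
Proof.
elim: i => [|i IH]; first by rewrite R0 muln0.
rewrite RS expnS -IH. nia.
Qed.
Lemma R_pos i : 0 < R i.+1.
Proof. rewrite RS; lia. Qed.

Definition Et (t : nat -> nat) := \sum_(j < n) t j * R j.+1.
Definition Kt (t : nat -> nat) := \sum_(j < n) t j.
Definition can (t : nat -> nat) :=
  (forall j, j < n -> t j <= b) /\
  (forall j, j < n -> t j = b -> forall i, i < j -> t i = 0).

Lemma K_le_E t : Kt t <= Et t.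
Proof.
rewrite /Kt /Et; apply: leq_sum => j _.
by rewrite leq_pmulr // R_pos.
Qed.

Lemma bound (t : nat -> nat) : can t -> forall k, k <= n -> \sum_(j < k) t j * R j.+1 < R k.+1.
Proof.
move=> [h1 h2]; elim=> [|k IH] hk; first by rewrite big_ord0 R_pos.
rewrite big_ord_recr /= (RS k.+1).
have hk' : k < n by [].
have := h1 k hk'.
case: (eqVneq (t k) b) => [htk _|htk htb].
- rewrite big1; last first.
    by move=> i _; rewrite (h2 k hk' htk i (ltn_ord i)).
  rewrite htk; lia.
- have IH' := IH (ltnW hk).
  have : (t k).+1 <= b by lia.
  move=> /(leq_mul (leqnn (R k.+1))); rewrite mulnS [R _ * b]mulnC [R _ * t k]mulnC => H.
  move: IH'; set S := \sum_(i<k) _; lia.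
Qed.


Lemma divmod_uniq a q a' q' d : a < d -> a' < d -> a + q * d = a' + q' * d ->
  q = q' /\ a = a'.
Proof.
move=> ha ha' e.
have h1 : (a + q * d) %/ d = q.
  rewrite addnC divnMDl ?divn_small ?addn0 //; lia.
have h2 : (a' + q' * d) %/ d = q'.
  rewrite addnC divnMDl ?divn_small ?addn0 //; lia.
have hq : q = q' by rewrite -h1 e h2.
split=> //; subst q'; lia.
Qed.

Lemma uniq_digits t u : can t -> can u -> Et t = Et u -> forall j, j < n -> t j = u j.
Proof.
move=> ct cu e.
suff H : forall k, k <= n -> \sum_(j < k) t j * R j.+1 = \sum_(j < k) u j * R j.+1 ->
  forall j, j < k -> t j = u j by apply: H.
elim=> [|k IH] hk ek j hj; first by [].
move: ek; rewrite !big_ord_recr /=.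
have bt := bound _ ct _ (ltnW hk); have bu := bound _ cu _ (ltnW hk).
move: bt bu; set St := \sum_(i < k) _; set Su := \sum_(i < k) _ => bt bu ek.
have [e1 e2] := divmod_uniq _ _ _ _ _ bt bu ek.
case: (ltngtP j k) => hjk.
- exact: IH (ltnW hk) e2 j hjk.
- lia.
- by subst j.
Qed.

Lemma uniq_K t u : can t -> can u -> Et t = Et u -> Kt t = Kt u.
Proof.
move=> ct cu e; rewrite /Kt; apply: eq_bigr => j _.
exact: uniq_digits _ _ ct cu e j (ltn_ord j).
Qed.

Lemma sum_upd (f g : nat -> nat) p : p < n -> (forall j, j != p -> f j = g j) ->
  \sum_(j < n) f j + g p = \sum_(j < n) g j + f p.
Proof.
move=> hp hfg.
rewrite (bigD1 (Ordinal hp)) //= [in RHS](bigD1 (Ordinal hp)) //=.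
rewrite (eq_bigr (fun j : 'I_n => g j)); last first.
  move=> j hj; apply: hfg; apply/eqP => hjp; move: hj.
  by rewrite (_ : j = Ordinal hp) ?eqxx //; exact: val_inj.
lia.
Qed.


Lemma term_le (f : nat -> nat) p : p < n -> f p <= \sum_(j < n) f j.
Proof. by move=> hp; rewrite (bigD1 (Ordinal hp)) //= leq_addr. Qed.

Lemma R1 : R 1 = 1. Proof. by rewrite RS R0 muln0. Qed.

Lemma incr t : can t -> Et t < b ^ n ->
  exists u, can u /\ Et u = (Et t).+1 /\ Kt u <= (Kt t).+1.
Proof.
move=> [c1 c2] hE.
have hn0 : 0 < n by lia.
case: (boolP [exists j : 'I_n, t j != 0]) => [/existsP [j0 hj0] | /existsPn hall].
- have exP : exists j, (j < n) && (t j != 0) by exists j0; rewrite ltn_ord.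
  case: (ex_minnP exP) => l /andP[hl htl] hmin.
  have low : forall i, i < l -> t i = 0.
    move=> i hi; apply/eqP; have hin : i < n by exact: ltn_trans hi hl.
    move: hi; apply: contraTT => hti; rewrite -leqNgt.
    by apply: hmin; rewrite hti andbT.
  case: (eqVneq (t l) b) => htlb.
  + case: (ltnP l.+1 n) => hl1; last first.
      have hln : l.+1 = n by lia.
      have := term_le (fun j => t j * R j.+1) l hl.
      rewrite -/(Et t) htlb hln => H.
      have := R_pow n; have : 0 < R n by rewrite -hln R_pos.
      move: H hE; set r := R n; set E := Et t => H hE h1 h2.
      have : b ^ n <= b * r by rewrite -h2; nia.
      lia.
    pose v := fun j => if j == l then 0 else t j.
    pose u := fun j => if j == l.+1 then (t l.+1).+1 else v j.
    exists u.
    have hvl1 : v l.+1 = t l.+1 by rewrite /v (_ : (l.+1 == l) = false) //; lia.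
    have tl1 : t l.+1 < b.
      have := c1 _ hl1; rewrite leq_eqVlt => /orP[/eqP h|//].
      by move: htl; rewrite (c2 _ hl1 h l (ltnSn l)).
    split; [split|split].
    * move=> j hj; rewrite /u /v; case: eqP => [_|_]; first exact: tl1.
      case: eqP => // _; exact: c1.
    * move=> j hj; rewrite /u /v.
      case: eqP => [-> _ i hi|hj1].
        rewrite (_ : (i == l.+1) = false); last by lia.
        case: eqP => // hil; apply: low; lia.
      case: eqP => [//|hjl]; first by move=> ->; move: hb; case: b.
      move=> htj; exfalso.
      have hlj : l <= j by apply: hmin; rewrite hj htj; case: b hb {htj} => [|].
      have : l < j by lia.
      by move=> /(c2 _ hj htj l); move/eqP: htl.
    * have e1 := sum_upd (fun j => v j * R j.+1) (fun j => t j * R j.+1) l hl.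
      have e2 := sum_upd (fun j => u j * R j.+1) (fun j => v j * R j.+1) l.+1 hl1.
      rewrite /= in e1 e2.
      have h1 : forall j, j != l -> v j * R j.+1 = t j * R j.+1.
        by move=> j hj; rewrite /v (negbTE hj).
      have h2 : forall j, j != l.+1 -> u j * R j.+1 = v j * R j.+1.
        by move=> j hj; rewrite /u (negbTE hj).
      move: (e1 h1) (e2 h2); rewrite /v /u eqxx hvl1 htlb (RS l.+1) -/(Et t).
      rewrite (_ : (l.+1 == l) = false); last by lia.
      rewrite eqxx /=.
      set Ev := \sum_(j < n) _; set Eu := \sum_(j < n) _.
      rewrite /Et -/Eu.
      set r := R l.+1; set tt := t l.+1. nia.
    * have e1 := sum_upd v t l hl.
      have e2 := sum_upd u v l.+1 hl1.
      have h1 : forall j, j != l -> v j = t j by move=> j hj; rewrite /v (negbTE hj).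
      have h2 : forall j, j != l.+1 -> u j = v j by move=> j hj; rewrite /u (negbTE hj).
      have hvl : v l = 0 by rewrite /v eqxx.
      have hul1 : u l.+1 = (t l.+1).+1 by rewrite /u eqxx.
      move: (e1 h1) (e2 h2); rewrite hvl hul1 hvl1 htlb /Kt.
      set Kv := \sum_(j < n) v j; set Ku := \sum_(j < n) u j; set K0 := \sum_(j < n) t j.
      lia.
  + pose u := fun j => if j == 0 then (t 0).+1 else t j.
    exists u; split; [split|split].
    * move=> j hj; rewrite /u; case: eqP => [_|_]; last exact: c1.
      case: (posnP l) => [l0|lpos]; first by subst l; have := c1 _ hl; lia.
      by rewrite low //; lia.
    * move=> j hj; rewrite /u; case: eqP => [->//|hjz] htj i hi.
      exfalso.
      have htj0 : t j != 0 by rewrite htj; case: b hb.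
      have hlj : l <= j by apply: hmin; rewrite hj htj0.
      case: (ltngtP l j) => hlj'.
      - by move: htl; rewrite (c2 _ hj htj l hlj').
      - lia.
      - by subst j; move/eqP: htlb.
    * have e1 := sum_upd (fun j => u j * R j.+1) (fun j => t j * R j.+1) 0 hn0.
      have h1 : forall j, j != 0 -> u j * R j.+1 = t j * R j.+1.
        by move=> j hj; rewrite /u (negbTE hj).
      move: (e1 h1); rewrite /= /u eqxx R1 -/(Et t).
      set Eu := \sum_(j < n) _. rewrite /Et -/Eu. lia.
    * have e1 := sum_upd u t 0 hn0.
      have h1 : forall j, j != 0 -> u j = t j by move=> j hj; rewrite /u (negbTE hj).
      move: (e1 h1); rewrite /= {2}/u eqxx -/(Kt t).
      set Ku := \sum_(j < n) _. rewrite /Kt -/Ku. lia.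
- pose u := fun j => if j == 0 then 1 else t j.
  have t0 : forall j, j < n -> t j = 0.
    by move=> j hj; have := hall (Ordinal hj); rewrite negbK => /eqP.
  exists u; split; [split|split].
  * move=> j hj; rewrite /u; case: eqP => _; [lia| by rewrite t0].
  * move=> j hj; rewrite /u; case: eqP => [->//|_].
    by rewrite t0 // => hb0; move: hb; rewrite -hb0.
  * have e1 := sum_upd (fun j => u j * R j.+1) (fun j => t j * R j.+1) 0 hn0.
    have h1 : forall j, j != 0 -> u j * R j.+1 = t j * R j.+1.
      by move=> j hj; rewrite /u (negbTE hj).
    move: (e1 h1); rewrite /= /u eqxx R1 (t0 0 hn0) -/(Et t).
    set Eu := \sum_(j < n) _. rewrite /Et -/Eu. lia.
  * have e1 := sum_upd u t 0 hn0.
    have h1 : forall j, j != 0 -> u j = t j by move=> j hj; rewrite /u (negbTE hj).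
    move: (e1 h1); rewrite /= {2}/u eqxx (t0 0 hn0) -/(Kt t).
    set Ku := \sum_(j < n) _. rewrite /Kt -/Ku. lia.
Qed.


Lemma incr_many d t : can t -> Et t + d <= b ^ n ->
  exists u, can u /\ Et u = Et t + d /\ Kt u <= Kt t + d.
Proof.
elim: d t => [|d IH] t ct hE.
  by exists t; rewrite !addn0.
have h1 : Et t < b ^ n by lia.
have [u1 [cu1 [e1 k1]]] := incr t ct h1.
have h2 : Et u1 + d <= b ^ n by rewrite e1; lia.
have [u [cu [e k]]] := IH u1 cu1 h2.
exists u; split=> //; split; lia.
Qed.

Lemma ex_can F : F <= b ^ n -> exists t, can t /\ Et t = F.
Proof.
move=> hF.
have c0 : can (fun _ => 0) by split=> // j _ hb0; move: hb; rewrite -hb0.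
have E0 : Et (fun _ => 0) = 0 by rewrite /Et big1.
have h0 : Et (fun _ => 0) + F <= b ^ n by rewrite E0.
have [u [cu [e _]]] := incr_many F _ c0 h0.
by exists u; rewrite e E0.
Qed.

Lemma shiftP t : can t -> t n.-1 = 0 ->
  can (fun j => if j is j'.+1 then t j' else 0) /\
  Et (fun j => if j is j'.+1 then t j' else 0) = b * Et t + Kt t /\
  Kt (fun j => if j is j'.+1 then t j' else 0) = Kt t.
Proof.
move=> [c1 c2] tn.
have [n' hn'] : exists n', n = n'.+1 by exists n.-1; lia.
split; [split|].
- by move=> [|j] hj //; apply: c1; lia.
- move=> [|j] hj // htj [|i] hi //; apply: (c2 j) => //; lia.
rewrite hn' /= in tn.
set s := fun j => if j is j'.+1 then t j' else 0.
have E1 : \sum_(j < n'.+1) s j * R j.+1 = \sum_(j < n') t j * R j.+2.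
  by rewrite big_ord_recl /= mul0n add0n.
have E2 : \sum_(j < n'.+1) t j * R j.+1 = \sum_(j < n') t j * R j.+1.
  by rewrite big_ord_recr /= tn mul0n addn0.
have K1 : \sum_(j < n'.+1) s j = \sum_(j < n') t j.
  by rewrite big_ord_recl /= add0n.
have K2 : \sum_(j < n'.+1) t j = \sum_(j < n') t j.
  by rewrite big_ord_recr /= tn addn0.
rewrite /Et /Kt hn' E1 E2 K1 K2; split=> //.
rewrite big_distrr -big_split /=; apply: eq_bigr => i _.
rewrite (RS i.+1); ring.
Qed.

Lemma opt k (a : nat -> nat) t : can t -> Et t <= b ^ n ->
  Et t = \sum_(i < k) a i * R i -> Kt t <= \sum_(i < k) a i.
Proof.
elim: k a t => [|k IH] a t ct hE e.
  move: e; rewrite big_ord0 => e; have := K_le_E t; rewrite e; lia.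
move: e; rewrite !big_ord_recl R0 muln0 add0n /=.
set F' := \sum_(i < k) a i.+1 * R i; set c' := \sum_(i < k) a i.+1.
have eF : \sum_(i < k) a (bump 0 i) * R (bump 0 i) = b * F' + c'.
  rewrite /F' /c' big_distrr -big_split /=; apply: eq_bigr => i _.
  rewrite RS; ring.
rewrite eF => e.
have hF' : F' <= b ^ n by move: hE; rewrite e; nia.
have [t' [ct' et']] := ex_can F' hF'.
have IH' := IH (fun i => a i.+1) t' ct' (ltac:(by rewrite et')) (ltac:(by rewrite et')).
have [n'' hn''] : exists n'', n = n''.+2 by exists n.-2; lia.
have tn : t' n.-1 = 0.
  apply/eqP; apply: contraT => hne.
  have h1 := term_le (fun j => t' j * R j.+1) n.-1 (ltac:(lia)).
  rewrite -/(Et t') et' /= in h1.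
  have h2 : R n.-1.+1 <= t' n.-1 * R n.-1.+1 by rewrite leq_pmull // lt0n.
  move: hE; rewrite e hn'' /= in h1 h2 * => hE.
  rewrite (RS' n''.+1) in h1 h2; rewrite expnS in hE.
  have hFp : F' <= b ^ n''.+1.
    rewrite -(@leq_pmul2l b) ?(ltnW hb) //; lia.
  have := R_pos n''.
  move: h1 h2 hFp; set r := R n''.+1; set p := b ^ n''.+1.
  set tt := t' n''.+1; set q := r + p; lia.
have [cs [Es Ks]] := shiftP t' ct' tn.
set s := (fun j => if j is j'.+1 then t' j' else 0) in cs Es Ks.
have hs : Et s + (c' - Kt t') <= b ^ n by rewrite Es et'; move: hE; rewrite e; lia.
have [u [cu [eu ku]]] := incr_many (c' - Kt t') s cs hs.
have hu : Et t = Et u by rewrite eu Es et' e; lia.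
have := uniq_K t u ct cu hu.
lia.
Qed.

End Aux.

Section Main.
Variables (b n : nat).
Hypothesis hb : 2 <= b.
Hypothesis hbe : ~~ odd b.
Hypothesis hn : 2 <= n.

Local Notation x := (b ^ n).
Local Notation m := (b ^ n + 1).

Lemma gen_eq i : gen b n i = (b - 1) * x * R b i + m.
Proof.
rewrite /gen expnD -(R_pow b n hb hn i); ring.
Qed.

Lemma sum_rep k (a : nat -> nat) :
  \sum_(i < k) a i * gen b n i =
  (b - 1) * x * (\sum_(i < k) a i * R b i) + m * (\sum_(i < k) a i).
Proof.
rewrite !big_distrr -big_split /=; apply: eq_bigr => i _.
rewrite gen_eq; ring.
Qed.

Lemma RCval_eq (t : 'I_n -> nat) (t' : nat -> nat) :
  (forall j : 'I_n, t j = t' j) ->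
  RCval b n t = (b - 1) * x * Et b n t' + m * Kt n t'.
Proof.
move=> h; rewrite /RCval /Et /Kt !big_distrr -big_split /=; apply: eq_bigr => j _.
rewrite gen_eq h; ring.
Qed.

Lemma inSC_of j (t' : nat -> nat) :
  inSC b n (j * gen b n 0 + \sum_(i < n) t' i * gen b n i.+1).
Proof.
exists n.+1, (fun i => if i is i'.+1 then t' i' else j).
by rewrite big_ord_recl.
Qed.

Lemma cop : coprime m ((b - 1) * x).
Proof.
rewrite coprimeMr addn1 coprimeSn andbT coprime_sym.
have e : (b ^ n).+1 = R b n * (b - 1) + 2.
  have := R_pow b n hb hn n; lia.
rewrite e /coprime gcdnMDl -/(coprime (b - 1) 2) coprimen2.
have : b = (b - 1).+1 by lia.
move=> eb; move: hbe; rewrite {1}eb /=; by case: (odd (b - 1)).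
Qed.

Definition ext (t : 'I_n -> nat) (j : nat) : nat :=
  if (insub j : option 'I_n) is Some i then t i else 0.

Lemma ext_val t (i : 'I_n) : ext t i = t i.
Proof. by rewrite /ext valK. Qed.

Lemma ext_lt t j (hj : j < n) : ext t j = t (Ordinal hj).
Proof. by rewrite -ext_val. Qed.

Lemma RC_can t : inRC b n t -> can b n (ext t).
Proof.
move=> [h1 [h2 _]]; split.
- by move=> j hj; rewrite ext_lt.
- move=> j hj; rewrite ext_lt => htj i hi.
  have hi' : i < n by lia.
  rewrite ext_lt; exact: (h2 _ htj (Ordinal hi') hi).
Qed.


Lemma sum_top N (f : nat -> nat) : 0 < N ->
  \sum_(j < N) f j = \sum_(j < N.-1) f j + f N.-1.
Proof. by case: N => // N _; rewrite big_ord_recr. Qed.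

Lemma sum_bot N (f : nat -> nat) : 0 < N ->
  \sum_(j < N) f j = f 0 + \sum_(j < N.-1) f j.+1.
Proof. by case: N => // N _; rewrite big_ord_recl. Qed.

Lemma two_le N (f : nat -> nat) i j : i < N -> j < N -> i != j ->
  f i + f j <= \sum_(k < N) f k.
Proof.
move=> hi hj hij.
rewrite (bigD1 (Ordinal hi)) //= (bigD1 (Ordinal hj)) /=; last first.
  by apply/eqP => /(congr1 val) /= e; move/eqP: hij; rewrite e.
set r := \sum_(k < N | _) _; lia.
Qed.

Lemma R2 i : 2 <= R b i.+2.
Proof. have := R_pos b n hb hn i; rewrite (RS' b i.+1) expnS; have := ltnW hb; nia. Qed.

Lemma RC_E t : inRC b n t -> Et b n (ext t) <= x.
Proof.
move=> hrc; have cn := RC_can t hrc; move: hrc => [h1 [h2 [h3 h4]]].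
have hn1 : n.-1 < n by lia.
have top : ext t n.-1 <= b.-1 by rewrite ext_lt; apply: h3 => /=; lia.
have bd := bound b n hb hn _ cn n.-1 (leq_pred n).
rewrite (prednK (ltnW hn)) in bd.
rewrite /Et (sum_top n (fun j => ext t j * R b j.+1)); last lia.
rewrite (prednK (ltnW hn)).
have hp := R_pow b n hb hn n.
move: bd; set P := \sum_(j < n.-1) _ => bd.
have [htop|htop] : ext t n.-1 < b.-1 \/ ext t n.-1 = b.-1 by lia.
- have : ext t n.-1 * R b n <= (b.-1).-1 * R b n by apply: leq_mul => //; lia.
  move: hp bd; set r := R b n; set e := ext t n.-1; nia.
- have htop' : t (Ordinal hn1) = b.-1 by rewrite -ext_lt.
  have hn1' : (Ordinal hn1 : 'I_n).+1 = n by rewrite /=; lia.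
  have [h4a h4b] := h4 (Ordinal hn1) hn1' htop'.
  have hP : P <= 1.
    rewrite /P (sum_bot n.-1 (fun j => ext t j * R b j.+1)); last lia.
    rewrite big1; last first.
      move=> j _; have hj0 := ltn_ord j; have hj : j.+1 < n by lia.
      rewrite ext_lt h4b //= ; lia.
    have h0 : 0 < n by lia.
    rewrite R1 muln1 addn0 (ext_lt t 0 h0); exact: h4a.
  rewrite htop; move: hp; set r := R b n.
  have -> : b.-1 = b - 1 by lia.
  lia.
Qed.

Lemma can_RC (t : nat -> nat) : can b n t -> Et b n t <= x ->
  inRC b n (fun j : 'I_n => t j).
Proof.
move=> [c1 c2] hE.
have hp := R_pow b n hb hn n.
have Rn2 : 2 <= R b n by have := R2 n.-2; rewrite -!subn1; have -> : (n - 1 - 1).+2 = n by lia.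
split; [|split; [|split]].
- by move=> j; apply: c1.
- by move=> j /= htj i hi; apply: (c2 j).
- move=> j /= hj; have := c1 j (ltn_ord j); rewrite leq_eqVlt => /orP[/eqP htj|]; last lia.
  exfalso.
  have := term_le n (fun j => t j * R b j.+1) j (ltn_ord j).
  rewrite -/(Et b n t) /= hj htj.
  move: hp; set r := R b n; nia.
- move=> j /= hj htj; split.
  + move=> i /= hi0.
    have hij : nat_of_ord i != nat_of_ord j by apply/eqP; lia.
    have := two_le n (fun j => t j * R b j.+1) i j (ltn_ord i) (ltn_ord j) hij.
    rewrite -/(Et b n t) /= hi0 hj htj R1 muln1.
    have -> : b.-1 = b - 1 by lia.
    lia.
  + move=> i /= hi0 hin.
    have hij : nat_of_ord i != nat_of_ord j by apply/eqP; lia.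
    have := two_le n (fun j => t j * R b j.+1) i j (ltn_ord i) (ltn_ord j) hij.
    rewrite -/(Et b n t) /= hj htj.
    have -> : b.-1 = b - 1 by lia.
    have R2i : 2 <= R b (nat_of_ord i).+1.
      by have := R2 (nat_of_ord i).-1; rewrite -subn1; have -> : (i - 1).+2 = (nat_of_ord i).+1 by lia.
    move: R2i hp; set r := R b n; set ri := R b (nat_of_ord i).+1; set ti := t i.
    nia.
Qed.

Lemma main_aux s : inApery b n (gen b n 0) s <->
    exists t : 'I_n -> nat, inRC b n t /\ s = RCval b n t.
Proof.
have g0 : gen b n 0 = m by rewrite /gen addn0.
have hm0 : 0 < m by rewrite addn1.
have hy : x <= (b - 1) * x by rewrite leq_pmull //; lia.
rewrite /inApery g0; split.
- move=> [[k [a hs]] hnot].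
  rewrite sum_rep in hs.
  move: hs; set F := \sum_(i < k) a i * R b i; set C := \sum_(i < k) a i => hs.
  set F0 := F %% m.
  have hF0 : F0 <= x by have := ltn_pmod F hm0; rewrite -/F0; lia.
  have [t' [ct' et']] := ex_can b n hb hn F0 hF0.
  exists (fun j : 'I_n => t' j); split; first by apply: can_RC => //; rewrite et'.
  have ev : RCval b n (fun j : 'I_n => t' j) = (b - 1) * x * F0 + m * Kt n t'.
    by rewrite (RCval_eq _ t') // et'.
  rewrite ev.
  move: ev; set K := Kt n t' => ev.
  have hK : K <= F0 by rewrite -et'; exact: K_le_E.
  have hF := divn_eq F m.
  move: hF; set q := F %/ m => hF.
  move: hs hF hK hy hF0; set y := (b - 1) * x => hs hF hK hy hF0.
  have hvs : y * F0 + m * K <= s.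
    case: (posnP q) => hq.
    + have eF : F = F0 by rewrite hF hq.
      have hE1 : Et b n t' <= x by rewrite et'.
      have hE2 : Et b n t' = \sum_(i < k) a i * R b i by rewrite et' -/F eF.
      have := opt b n hb hn k a t' ct' hE1 hE2.
      rewrite -/C -/K hs eF => hKC.
      by rewrite leq_add2l leq_mul2l hKC orbT.
    + rewrite hs hF.
      have h1 : m * K <= m * x by rewrite leq_mul2l; lia.
      have h2 : m * x <= y * (q * m).
        apply: (leq_trans _ (leq_mul hy (leqnn (q * m)))).
        by rewrite mulnC leq_mul2l leq_pmull // orbT.
      lia.
  have hl : K <= y * q + C.
    move: hvs; rewrite hs hF mulnDr => hvs.
    have : m * K <= m * (y * q + C) by rewrite mulnDr; rewrite mulnA [y * q]mulnC -mulnA in hvs *; nia.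
    by rewrite leq_pmul2l.
  have es : s = y * F0 + m * K + m * (y * q + C - K).
    rewrite hs hF -/F0.
    have e3 : y * (q * m + F0) = y * F0 + m * (y * q) by ring.
    rewrite e3 mulnBr mulnDr.
    have : m * K <= m * (y * q) + m * C by rewrite -mulnDr leq_pmul2l.
    set u1 := m * K; set u2 := m * (y * q); set u3 := m * C.
    lia.
  move: es; set l := y * q + C - K => es.
  case: (posnP l) => hl0; first by rewrite es hl0 muln0 addn0.
  exfalso; apply: hnot; split.
    rewrite es; have : m <= m * l by rewrite leq_pmulr.
    lia.
  have := inSC_of l.-1 t'.
  have -> : \sum_(i < n) t' i * gen b n i.+1 = y * F0 + m * K by rewrite -ev.
  rewrite g0 (_ : s - m = l.-1 * m + (y * F0 + m * K)) //.
  rewrite es; have -> : l = l.-1.+1 by lia.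
  rewrite mulnS /=; set z := m * l.-1; have -> : l.-1 * m = z by rewrite /z mulnC.
  lia.
- move=> [t [hrc ->]].
  have ct := RC_can t hrc; have hE := RC_E t hrc.
  have ev : \sum_(i < n) ext t i * gen b n i.+1 = RCval b n t.
    by apply: eq_bigr => i _; rewrite ext_val.
  split; first by have := inSC_of 0 (ext t); rewrite mul0n add0n ev.
  move=> [hms [k [a ha]]].
  have er := RCval_eq t (ext t) (fun j => esym (ext_val t j)).
  rewrite er sum_rep in ha; rewrite er in hms.
  have hK := K_le_E b n hb hn (ext t).
  move: ha hms hK hE hy.
  set E := Et b n (ext t); set K := Kt n (ext t).
  set F := \sum_(i < k) a i * R b i; set C := \sum_(i < k) a i; set y := (b - 1) * x.
  move=> ha hms hK hE hy.
  have eq : y * E + m * K = y * F + m * C + m by lia.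
  have hmx : x < m by lia.
  case: (leqP F E) => hFE.
  + have hyF : y * F <= y * E by rewrite leq_mul2l hFE orbT.
    have e2 : y * (E - F) + m * K = m * (C + 1) by rewrite mulnBr mulnDr muln1; lia.
    have hd : m %| y * (E - F).
      have h : m %| y * (E - F) + m * K by apply/dvdnP; exists (C + 1); rewrite e2 mulnC.
      have hmK : m %| m * K by apply/dvdnP; exists K; rewrite mulnC.
      by rewrite (dvdn_addl _ hmK) in h.
    rewrite Gauss_dvdr in hd; last exact: cop.
    have hEF : E - F = 0.
      apply/eqP; apply: contraT; rewrite -lt0n => hpos.
      have := dvdn_leq hpos hd; lia.
    have eFE : F = E by lia.
    have eKC : K = C + 1.
      apply/eqP; rewrite -(eqn_pmul2l hm0); apply/eqP.
      by move: e2; rewrite hEF muln0 add0n.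
    have := opt b n hb hn k a (ext t) ct hE (ltac:(by rewrite -/E -eFE)).
    rewrite -/K -/C; lia.
  + have hyF : y * E <= y * F by rewrite leq_mul2l ltnW ?orbT.
    have e2 : y * (F - E) + m * (C + 1) = m * K by rewrite mulnBr mulnDr muln1; lia.
    have hd : m %| y * (F - E).
      have h : m %| y * (F - E) + m * (C + 1) by apply/dvdnP; exists K; rewrite e2 mulnC.
      have hmK : m %| m * (C + 1) by apply/dvdnP; exists (C + 1); rewrite mulnC.
      by rewrite (dvdn_addl _ hmK) in h.
    rewrite Gauss_dvdr in hd; last exact: cop.
    have hpos : 0 < F - E by lia.
    have hmFE := dvdn_leq hpos hd.
    have h1 : y * m <= y * (F - E) by rewrite leq_mul2l hmFE orbT.
    have h2 : m * (y + 1) <= m * K by rewrite mulnDr muln1 mulnC; lia.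
    rewrite leq_pmul2l // in h2.
    lia.
Qed.
End Main.


Theorem mainTheorem16 (b n : nat) (hb : 2 <= b) (hbe : ~~ odd b) (hn : 2 <= n) :
  forall s : nat,
    inApery b n (gen b n 0) s <->
    exists t : 'I_n -> nat, inRC b n t /\ s = RCval b n t.
Proof. move=> s; exact: main_aux. Qed.
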